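(* Let $X$ be a locally K-elastic Polish space without isolated points, let $\Gamma$ be the group of self-homeomorphisms $h$ of $X$ for which $\{x\in X:h(x)\neq x\}$ has compact closure (the same conclusion holds for the group of all self-homeomorphisms), acting by application, and let $I$ be the ideal of nowhere dense subsets of $X$. Then Player II has a winning strategy in the DC game for $\Gamma\curvearrowright X, I$.
   Context: A Polish space $X$ is K-elastic if it is locally compact and for every nonempty open set $O\subseteq X$ with compact closure and every compact $K\subseteq X$ there is a self-homeomorphism $h$ of $X$ with $K\subseteq h[O]$ and such that $\{x\in X: h(x)\neq x\}$ has compact closure. $X$ is locally K-elastic if it has a basis of open sets each of which (as a subspace) is K-elastic. The DC game for a group $\Gamma$ acting on $X$ and an invariant ideal $I$: players I and II alternate for $\omega$ rounds; at round $n$ Player I plays $a_n\in I$ and Player II answers with $\gamma_n\in\Gamma$, subject to $\gamma_0=1$ and $\gamma_n$ fixes every element of $\bigcup_{m<n}\gamma_m\cdot a_m$ (where $\gamma\cdot a=\{\gamma\cdot x:x\in a\}$). Player II wins if $\bigcup_{n}\gamma_n\cdot a_n\in I$. *)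

(* Defs.v *)
From HB Require Import structures.
From mathcomp Require Import all_boot all_order all_algebra.
From mathcomp Require Import all_classical all_reals all_analysis.
From mathcomp Require Import Rstruct Rstruct_topology.

Set Implicit Arguments. Unset Strict Implicit. Unset Printing Implicit Defensive.
Import Order.TTheory GRing.Theory Num.Theory.
Local Open Scope classical_set_scope.
Local Open Scope ring_scope.

Section Defs.
Variable T : topologicalType.

Definition metric_compatible (d : T -> T -> Rdefinitions.R) : Prop :=
  forall A : set T, open A <->
    (forall x, A x -> exists e : Rdefinitions.R, 0 < e /\ [set y | d x y < e] `<=` A).

Definition metric_complete (d : T -> T -> Rdefinitions.R) : Prop :=
  forall u : nat -> T,
    (forall e : Rdefinitions.R, 0 < e -> exists N, forall m n, (N <= m)%N -> (N <= n)%N ->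
        d (u m) (u n) < e) ->
    exists x : T, u @ \oo --> x.

Definition complete_compatible_metric (d : T -> T -> Rdefinitions.R) : Prop :=
  (forall x y, 0 <= d x y) /\
  (forall x y, d x y = 0 <-> x = y) /\
  (forall x y, d x y = d y x) /\
  (forall x y z, d x z <= d x y + d y z) /\
  metric_compatible d /\ metric_complete d.

Definition polish : Prop :=
  (exists D : set T, countable D /\ dense D) /\
  (exists d : T -> T -> Rdefinitions.R, complete_compatible_metric d).

Definition no_isolated_points : Prop := forall x : T, ~ open [set x].

Definition nowhere_dense (A : set T) : Prop := (closure A)° = set0.

Definition locally_compact_on (U : set T) : Prop :=
  forall x, U x -> exists C : set T, [/\ compact C, C `<=` U & nbhs x C].

(** h is a self-homeomorphism of the subspace U (values outside U irrelevant). *)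
Definition homeo_on (U : set T) (h : T -> T) : Prop :=
  exists g : T -> T,
    [/\ (forall x, U x -> U (h x)), (forall x, U x -> U (g x)),
        (forall x, U x -> g (h x) = x), (forall x, U x -> h (g x) = x) &
        ({within U, continuous h} /\ {within U, continuous g})].

Definition supp_on (U : set T) (h : T -> T) : set T := [set x | U x /\ h x <> x].

(** The closure in the subspace U of a set S ⊆ U is [closure S `&` U]. *)
Definition K_elastic_on (U : set T) : Prop :=
  locally_compact_on U /\
  forall O : set T, open O -> O `<=` U -> O !=set0 -> compact (closure O `&` U) ->
  forall K : set T, K `<=` U -> compact K ->
  exists h : T -> T, [/\ homeo_on U h, K `<=` h @` O &
                        compact (closure (supp_on U h) `&` U)].

Definition locally_K_elastic : Prop :=
  exists B : set (set T),
    (forall U, B U -> open U /\ K_elastic_on U) /\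
    (forall x (V : set T), open V -> V x -> exists U, [/\ B U, U x & U `<=` V]).

Definition Gamma (h : T -> T) : Prop :=
  homeo_on setT h /\ compact (closure [set x | h x <> x]).

(** A strategy for Player II maps the list [a_0; ...; a_n] of
    Player I's moves so far to Player II's answer gamma_n. *)
Definition II_strategy := seq (set T) -> (T -> T).

Definition history (a : nat -> set T) (n : nat) : seq (set T) := mkseq a n.+1.

Definition winning_II (sigma : II_strategy) : Prop :=
  forall a : nat -> set T, (forall n, nowhere_dense (a n)) ->
  let gamma := fun n => sigma (history a n) in
  [/\ (forall n, Gamma (gamma n)),
      gamma 0%N = id,
      (forall n m, (m < n)%N -> forall y, (gamma m @` a m) y -> gamma n y = y) &
      nowhere_dense (\bigcup_n (gamma n @` a n))].

End Defs.

(* Main.v *)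
Require Import Defs.
From HB Require Import structures.
From mathcomp Require Import all_boot all_order all_algebra.
From mathcomp Require Import all_classical all_reals all_analysis.
From mathcomp Require Import Rstruct Rstruct_topology lra.
Set Implicit Arguments. Unset Strict Implicit. Unset Printing Implicit Defensive.
Import Order.TTheory GRing.Theory Num.Theory.
Local Open Scope classical_set_scope.
Local Open Scope ring_scope.
Section Metric.
Variable T : topologicalType.
Variable d : T -> T -> Rdefinitions.R.
Hypothesis hd : complete_compatible_metric d.

Let d_ge0 x y : 0 <= d x y. Proof. by case: hd. Qed.
Let d_eq0 x y : d x y = 0 <-> x = y. Proof. by case: hd => _ []. Qed.
Let d_sym x y : d x y = d y x. Proof. by case: hd => _ [_ []]. Qed.
Let d_tri x y z : d x z <= d x y + d y z. Proof. by case: hd => _ [_ [_ []]]. Qed.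
Let d_compat : metric_compatible d. Proof. by case: hd => _ [_ [_ [_ []]]]. Qed.

Lemma ball_open x e : open [set y | d x y < e].
Proof.
apply/d_compat => y hy; exists (e - d x y); split; first by rewrite subr_gt0.
move=> z /= hz; have := d_tri x y z; lra.
Qed.

Lemma nbhs_ball x A : nbhs x A -> exists e, 0 < e /\ [set y | d x y < e] `<=` A.
Proof.
rewrite nbhsE => -[B [oB Bx] BA].
have [e [e0 eB]] := (proj1 (d_compat B) oB x Bx).
by exists e; split => // y /eB /BA.
Qed.

Lemma ball_nbhs x e : 0 < e -> nbhs x [set y | d x y < e].
Proof.
move=> e0; apply: open_nbhs_nbhs; split; first exact: ball_open.
by rewrite /= (proj2 (d_eq0 x x) erefl).
Qed.

Lemma cball_closed x e : closed [set y | d x y <= e].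
Proof.
have -> : [set y | d x y <= e] = ~` [set y | e < d x y].
  apply/seteqP; split => y /=; first by move=> h1 h2; lra.
  by move=> h; rewrite leNgt; apply/negP.
apply: open_closedC; apply/d_compat => y /= hy; exists (d x y - e); split.
  by rewrite subr_gt0.
move=> z /= hz; have := d_tri x z y; rewrite (d_sym z y); lra.
Qed.

Lemma metric_hausdorff : hausdorff_space T.
Proof.
move=> p q cl; apply: contrapT => npq.
have dpos : 0 < d p q.
  rewrite lt0r d_ge0 andbT; apply/eqP => /d_eq0; exact: npq.
have := cl _ _ (ball_nbhs p (divr_gt0 dpos (ltr0Sn _ 1))) (ball_nbhs q (divr_gt0 dpos (ltr0Sn _ 1))).
move=> [z [/= h1 h2]]; have := d_tri p z q; rewrite (d_sym z q); lra.
Qed.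

End Metric.
Section Topo.
Variable T : topologicalType.

Lemma nd_union (A B : set T) : nowhere_dense A -> nowhere_dense B -> nowhere_dense (A `|` B).
Proof.
rewrite /nowhere_dense closureU => hA hB; apply/seteqP; split => x // hx.
move: hx; rewrite /interior nbhsE; move=> -[V [oO Ox] OAB].
have OA : V `<=` closure A.
  move=> y Oy; apply: contrapT => nAy.
  have : (closure B)° y.
    apply: (@filterS _ _ _ (V `&` ~` closure A)); last first.
      apply: open_nbhs_nbhs; split => //; apply: openI => //.
      by rewrite -closedC setCK; exact: closed_closure.
    by move=> z [/OAB [] // ? ?].
  by rewrite hB.
have : (closure A)° x by rewrite /interior; apply: (filterS OA); exact: open_nbhs_nbhs.
by rewrite hA.
Qed.

Lemma open_disj_closure (G A : set T) : open G -> G `&` A = set0 -> G `&` closure A = set0.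
Proof.
move=> oG GA; apply/seteqP; split => x // [Gx cAx].
have [y [Ay Gy]] := cAx G (open_nbhs_nbhs (conj oG Gx)).
by have : (G `&` A) y by []; rewrite GA.
Qed.

Lemma nd_open_diff (A N : set T) : nowhere_dense A -> open N -> N !=set0 ->
  exists y, N y /\ ~ closure A y.
Proof.
move=> hA oN [x Nx]; apply: contrapT => hn.
have : (closure A)° x.
  apply: (filterS _ (open_nbhs_nbhs (conj oN Nx))) => y Ny.
  by apply: contrapT => ncy; apply: hn; exists y.
by rewrite hA.
Qed.

Lemma closure_pre (f g : T -> T) (A : set T) y :
  (forall x, g (f x) = x) -> {for f y, continuous g} ->
  closure (f @` A) (f y) -> closure A y.
Proof.
move=> gf cg hc U hU.
have hU' : nbhs (f y) (g @^-1` U) by apply: cg; rewrite gf.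
have [_ [[a Aa <-] /= hU'']] := hc _ hU'.
by exists a; split => //; rewrite -(gf a).
Qed.

Lemma nd_image (f g : T -> T) (A : set T) :
  (forall x, g (f x) = x) -> (forall x, f (g x) = x) ->
  continuous f -> continuous g -> nowhere_dense A -> nowhere_dense (f @` A).
Proof.
move=> gf fg cf cg hA; apply/seteqP; split => x // hx.
have : (closure A)° (g x).
  have h1 : nbhs (g x) (f @^-1` closure (f @` A)).
    by apply: cf; rewrite fg.
  apply: (filterS _ h1) => y /= hy; apply: (closure_pre gf) => //; exact: cg.
by rewrite hA.
Qed.

End Topo.
Lemma closure_min (T : topologicalType) (A F : set T) : closed F -> A `<=` F -> closure A `<=` F.
Proof. by move=> cF AF; rewrite (closure_id F).1 //; exact: closureS. Qed.

Section Elastic.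
Variable T : topologicalType.
Variable d : T -> T -> Rdefinitions.R.
Hypothesis hd : complete_compatible_metric d.
Variable B : set (set T).
Hypothesis hB1 : forall U, B U -> open U /\ K_elastic_on U.
Hypothesis hB2 : forall x (V : set T), open V -> V x -> exists U, [/\ B U, U x & U `<=` V].

Let d_tri x y z : d x z <= d x y + d y z. Proof. by case: hd => _ [_ [_ []]]. Qed.

Lemma small_open_B (G : set T) y : open G -> G y ->
  exists M, [/\ B M, M y, compact (closure M) & closure M `<=` G].
Proof.
move=> oG Gy; have [E [BE Ey EG]] := hB2 oG Gy.
have [oE [lcE _]] := hB1 BE.
have [C [cC CE nC]] := lcE y Ey.
have [e [e0 eC]] := nbhs_ball hd nC.
have e20 : 0 < e / 2 by rewrite divr_gt0.
have [M [BM My MB]] := hB2 (ball_open hd y (e / 2)) (nbhs_singleton (ball_nbhs hd y e20)).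
have cM : closure M `<=` [set z | d y z <= e / 2].
  apply: closure_min; first exact: cball_closed.
  by move=> z /MB /= h; apply: ltW.
have MC : closure M `<=` C by move=> z /cM /= h; apply: eC => /=; lra.
exists M; split => //; last by move=> z /MC /CE /EG.
by apply: (subclosed_compact _ cC MC); exact: closed_closure.
Qed.

End Elastic.
Lemma cont_near (T : topologicalType) (f g : T -> T) (W : set T) x :
  nbhs x W -> (forall z, W z -> f z = g z) -> {for x, continuous g} -> {for x, continuous f}.
Proof.
move=> nW fg cg U; rewrite (fg x (nbhs_singleton nW)) => /cg hU.
apply: (filterS _ (filterI nW hU)) => z [Wz /=]; by rewrite /= fg.
Qed.

Section Ext.
Variable T : topologicalType.
Hypothesis hT : hausdorff_space T.

Definition ext (N : set T) (h : T -> T) : T -> T := fun x => if x \in N then h x else x.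

Lemma ext_in (N : set T) (h : T -> T) x : N x -> ext N h x = h x.
Proof. by move=> Nx; rewrite /ext ifT // inE. Qed.

Lemma ext_out (N : set T) (h : T -> T) x : ~ N x -> ext N h x = x.
Proof. by move=> Nx; rewrite /ext ifF //; apply/negbTE; rewrite notin_setE. Qed.

Lemma supp_closure_sub (N : set T) (h : T -> T) : compact (closure (supp_on N h) `&` N) ->
  closure (supp_on N h) `<=` closure (supp_on N h) `&` N.
Proof.
move=> cS; apply: closure_min; first exact: compact_closed.
by move=> x hx; split; [exact: subset_closure | case: hx].
Qed.

Lemma ext_Gamma (N : set T) (h : T -> T) : open N -> homeo_on N h -> compact (closure (supp_on N h) `&` N) ->
  Gamma (ext N h).
Proof.
move=> oN [g [hN gN gh hg [ch cg]]] cS.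
set S := closure (supp_on N h) `&` N.
have cSS := supp_closure_sub cS.
have clS : closed S by exact: compact_closed.
have hid : forall x, N x -> ~ S x -> h x = x.
  move=> x Nx nSx; apply: contrapT => hx; apply: nSx; apply: cSS.
  by apply: subset_closure; split.
have gid : forall x, N x -> ~ S x -> g x = x.
  move=> x Nx nSx; apply: contrapT => gx; apply: nSx; apply: cSS.
  apply: subset_closure; split => // hx; apply: gx.
  by rewrite -{1}hx gh.
rewrite continuous_open_subspace // in ch.
rewrite continuous_open_subspace // in cg.
have oS : open (~` S) by rewrite -closedC setCK.
have cont : forall k, (forall x, N x -> ~ S x -> k x = x) -> {in N, continuous k} ->
    continuous (ext N k).
  move=> k kid ck x; have [Nx|nNx] := pselect (N x).
    apply: (@cont_near _ _ k N); first exact: open_nbhs_nbhs.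
      by move=> z Nz; rewrite ext_in.
    by apply: ck; rewrite inE.
  have nSx : ~ S x by move=> [].
  apply: (@cont_near _ _ id (~` S)); first exact: open_nbhs_nbhs.
    move=> z nSz; have [Nz|nNz] := pselect (N z); first by rewrite ext_in // kid.
    by rewrite ext_out.
  exact: cvg_id.
split.
  exists (ext N g); split => //.
  - move=> x _ /=; have [Nx|nNx] := pselect (N x).
      by rewrite ext_in // ext_in ?gh //; exact: hN.
    by rewrite !ext_out.
  - move=> x _ /=; have [Nx|nNx] := pselect (N x).
      by rewrite ext_in // ext_in ?hg //; exact: gN.
    by rewrite !ext_out.
  - split; apply: (proj1 (continuous_subspace_setT _)); apply: cont => //.
apply: (subclosed_compact _ cS); first exact: closed_closure.
apply: closure_min => // x /= hx; have [Nx|nNx] := pselect (N x).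
  by apply: cSS; apply: subset_closure; split => //; rewrite -(ext_in h Nx).
by exfalso; apply: hx; rewrite ext_out.
Qed.

End Ext.
Section Comp.
Variable T : topologicalType.
Hypothesis hT : hausdorff_space T.

Lemma homeo_setT (h : T -> T) : homeo_on setT h ->
  exists g, [/\ (forall x, g (h x) = x), (forall x, h (g x) = x), continuous h & continuous g].
Proof.
move=> [g [_ _ gh hg [ch cg]]]; exists g; split => //.
- by move=> x; apply: gh.
- by move=> x; apply: hg.
- exact/continuous_subspace_setT.
- exact/continuous_subspace_setT.
Qed.

Lemma Gamma_id : Gamma (@id T).
Proof.
split.
  exists id; split => //; split; apply: (proj1 (continuous_subspace_setT _)) => x; exact: cvg_id.
have -> : [set x : T | id x <> x] = set0 by apply/seteqP; split => x //=.
by rewrite closure0; exact: compact0.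
Qed.

Lemma Gamma_comp (f h : T -> T) : Gamma f -> Gamma h -> Gamma (f \o h).
Proof.
move=> [hf cf] [hh ch].
have [f' [f1 f2 fc f'c]] := homeo_setT hf.
have [h' [h1 h2 hc h'c]] := homeo_setT hh.
split.
  exists (h' \o f'); split => //.
  - by move=> x _ /=; rewrite f1 h1.
  - by move=> x _ /=; rewrite h2 f2.
  - split; apply: (proj1 (continuous_subspace_setT _)) => x; apply: continuous_comp.
    + exact: hc.
    + exact: fc.
    + exact: f'c.
    + exact: h'c.
have cU := compactU ch cf.
apply: (subclosed_compact _ cU); first exact: closed_closure.
apply: closure_min; first exact: compact_closed.
move=> x /= hx; have [e|ne] := pselect (h x = x).
  by right; apply: subset_closure => /=; move: hx => /=; rewrite e.
by left; apply: subset_closure.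
Qed.

End Comp.
Section Image.
Variable T : topologicalType.
Hypothesis hT : hausdorff_space T.

Lemma closure_map (p : T -> T) (A Bs : set T) x : {for x, continuous p} ->
  (forall z, A z -> Bs (p z)) -> closure A x -> closure Bs (p x).
Proof.
move=> cp AB cA W /cp hW; have [z [Az /= Wz]] := cA _ hW.
by exists (p z); split => //; apply: AB.
Qed.

Lemma compact_trick (C U Q : set T) : closed C -> compact Q -> Q `<=` U ->
  C `&` U `<=` Q -> compact (C `&` U).
Proof.
move=> cC cQ QU CUQ.
have -> : C `&` U = C `&` Q.
  apply/seteqP; split => x [Cx hx]; split => //; [exact: CUQ | exact: QU].
apply: (@subclosed_compact _ (C `&` Q) Q); last by move=> ? [].
  by apply: closedI => //; exact: compact_closed.
exact: cQ.
Qed.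

Variables (f g : T -> T).
Hypotheses (gf : forall x, g (f x) = x) (fg : forall x, f (g x) = x).
Hypotheses (cf : continuous f) (cg : continuous g).

Lemma img_pre (U : set T) : f @` U = g @^-1` U.
Proof.
apply/seteqP; split => x.
  by move=> [u Uu <-] /=; rewrite gf.
by move=> /= Ux; exists (g x) => //.
Qed.

Lemma Kel_image (U : set T) : open U -> K_elastic_on U ->
  open (f @` U) /\ K_elastic_on (f @` U).
Proof.
move=> oU [lcU elU]; rewrite img_pre.
set V := g @^-1` U.
have oV : open V by move: oU; apply: (proj1 (continuousP g)).
split => //; split.
  move=> x Vx; have [C [cC CU nC]] := lcU (g x) Vx.
  exists (f @` C); split.
  - apply: continuous_compact => //; apply: continuous_subspaceT; exact: cf.
  - by move=> _ [c Cc <-]; rewrite /V /= gf; apply: CU.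
  - have : nbhs x (g @^-1` C) by apply: cg.
    by apply: filterS => z /= Cz; exists (g z).
move=> ob oob obU [w0 obo] cob K KV cK.
set O' := f @^-1` ob.
have oob' : open O' by move: oob; apply: (proj1 (continuousP f)).
have O'U : O' `<=` U.
  by move=> z /obU; rewrite /V /= gf.
have cO' : compact (closure O' `&` U).
  apply: (@compact_trick _ _ (g @` (closure ob `&` V))).
  - exact: closed_closure.
  - apply: continuous_compact => //; apply: continuous_subspaceT; exact: cg.
  - by move=> _ [z [_ Vz] <-].
  - move=> z [clz Uz]; exists (f z); last by rewrite gf.
    split; last by rewrite /V /= gf.
    move: clz; apply: closure_map; [exact: cf | by move=> w].
have K'U : g @` K `<=` U by move=> _ [k Kk <-]; apply: KV.
have cK' : compact (g @` K).
  apply: continuous_compact => //; apply: continuous_subspaceT; exact: cg.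
have O'ne : O' !=set0 by exists (g w0); rewrite /O' /= fg.
have [h' [[h'' [h'U h''U h''h' h'h'' [ch' ch'']]] KO' cS]] := elU O' oob' O'U O'ne cO' _ K'U cK'.
rewrite continuous_open_subspace // in ch'.
rewrite continuous_open_subspace // in ch''.
exists (f \o h' \o g); split.
- exists (f \o h'' \o g); split.
  + by move=> x Vx; rewrite /V /= gf; apply: h'U.
  + by move=> x Vx; rewrite /V /= gf; apply: h''U.
  + by move=> x Vx /=; rewrite gf h''h' // fg.
  + by move=> x Vx /=; rewrite gf h'h'' // fg.
  + have c3 : forall k : T -> T, {in U, continuous k} -> {in V, continuous (f \o k \o g)}.
      move=> k ck x; rewrite inE => Vx.
      apply: continuous_comp; first exact: cg.
      apply: continuous_comp; last exact: cf.
      by apply: ck; rewrite inE.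
    by rewrite !continuous_open_subspace //; split; apply: c3.
- move=> k Kk; have [w' O'w' e] := KO' (g k) (ex_intro2 _ _ k Kk erefl).
  by exists (f w') => //=; rewrite gf e fg.
- apply: (@compact_trick _ _ (f @` (closure (supp_on U h') `&` U))).
  + exact: closed_closure.
  + apply: continuous_compact => //; apply: continuous_subspaceT; exact: cf.
  + by move=> _ [z [_ Uz] <-]; rewrite /V /= gf.
  + move=> z [clz Vz]; exists (g z); last by rewrite fg.
    split => //; move: clz; apply: closure_map; first exact: cg.
    move=> w [Vw hw]; split => //.
    by move=> e; apply: hw => /=; rewrite e fg.
Qed.

End Image.
Section Shrink.
Variable T : topologicalType.
Variable d : T -> T -> Rdefinitions.R.
Hypothesis hd : complete_compatible_metric d.
Variable B : set (set T).
Hypothesis hB1 : forall U, B U -> open U /\ K_elastic_on U.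
Hypothesis hB2 : forall x (V : set T), open V -> V x -> exists U, [/\ B U, U x & U `<=` V].

Let hT := metric_hausdorff hd.

Lemma shrink_region (N C a : set T) : open N -> K_elastic_on N -> compact C -> C `<=` N ->
  nowhere_dense a ->
  exists gm N', [/\ Gamma gm, (forall x, ~ N x -> gm x = x), (forall x, N x -> N (gm x)),
     [/\ N' `<=` N, open N', K_elastic_on N' & C `<=` N'] &
     (forall x, a x -> N x -> ~ N' (gm x))].
Proof.
move=> oN kN cC CN na.
have [[y Ny]|N0] := pselect (N !=set0); last first.
  exists id, N; split => //; [exact: Gamma_id | by split | ].
  by move=> x _ Nx; exfalso; apply: N0; exists x.
have [y' [Ny' nay']] := nd_open_diff na oN (ex_intro _ y Ny).
have oG : open (N `&` ~` closure a).
  by apply: openI => //; rewrite -closedC setCK; exact: closed_closure.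
have [M [BM My' cM MG]] := small_open_B hd hB1 hB2 oG (conj Ny' nay').
have [oM _] := hB1 BM.
have MN : M `<=` N by move=> z /(@subset_closure _ M) /MG [].
have cMN : compact (closure M `&` N).
  by rewrite setIidl // => z /MG [].
have [h [hh CM cS]] := kN.2 M oM MN (ex_intro _ y' My') cMN C CN cC.
have hN : forall x, N x -> N (h x) by case: hh => g [].
have Gg := ext_Gamma hT oN hh cS.
have [g [gf fg cf cg]] := homeo_setT Gg.1.
have [oN' kN'] := Kel_image hT gf fg cf cg oM (hB1 BM).2.
exists (ext N h), (ext N h @` M); split => //.
- by move=> x nx; rewrite ext_out.
- by move=> x Nx; rewrite ext_in //; apply: hN.
- split => //.
    by move=> _ [m Mm <-]; rewrite ext_in; [apply: hN|]; apply: MN.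
  move=> c /CM [m Mm <-]; exists m => //; rewrite ext_in //; exact: MN.
- move=> x ax Nx [m Mm e].
  have xm : m = x by rewrite -(gf m) e gf.
  have : closure a x by apply: subset_closure.
  by rewrite -xm in ax *; have [_] := MG m (subset_closure Mm).
Qed.

End Shrink.
Section Enum.
Variable T : topologicalType.
Variable d : T -> T -> Rdefinitions.R.
Hypothesis hd : complete_compatible_metric d.
Variable D : set T.
Hypothesis hcD : countable D.
Hypothesis hdD : dense D.

Let d_eq0 x y : d x y = 0 <-> x = y. Proof. by case: hd => _ []. Qed.
Let d_tri x y z : d x z <= d x y + d y z. Proof. by case: hd => _ [_ [_ []]]. Qed.
Let d_compat : metric_compatible d. Proof. by case: hd => _ [_ [_ [_ []]]]. Qed.

Lemma inv_small (e : Rdefinitions.R) : 0 < e -> exists n : nat, (n.+1%:R)^-1 < e / 2.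
Proof.
move=> e0; have e20 : 0 < e / 2 by rewrite divr_gt0.
have h0 : 0 <= (e / 2)^-1 by rewrite invr_ge0 ltW.
exists (Num.Def.archi_bound (e / 2)^-1).
have h1 := archi_boundP h0.
set N := (Num.Def.archi_bound (e / 2)^-1).
have h2 : (e / 2)^-1 < N.+1%:R by rewrite (lt_le_trans h1) // ler_nat.
rewrite -(invrK (e / 2)) ltf_pV2 // posrE ?invr_gt0 //.

Qed.

Lemma enum_exists : exists V : nat -> set T, (forall k, open (V k)) /\
  (forall G, open G -> G !=set0 -> exists k, V k !=set0 /\ V k `<=` G).
Proof.
have /countable_injP [f finj] := hcD.
have [pick hpick] := choice (fun i : nat => (ltac:(
  have [[x [Dx fx]]|nx] := pselect (exists x, D x /\ f x = i);
    [exists (Some x); exact: (conj Dx fx) | exists None; exact: nx]) :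
  exists ox : option T, match ox with Some x => D x /\ f x = i | None => ~ (exists x, D x /\ f x = i) end)).
pose V k := match (unpickle k : option (nat * nat)) with
  | Some (i, n) => match pick i with Some x => [set y | d x y < (n.+1%:R)^-1] | None => set0 end
  | None => set0 end.
exists V; split.
  move=> k; rewrite /V; case: (unpickle k) => [[i n]|]; last exact: (@open0 T).
  by case: (pick i) => [x|]; [exact: ball_open | exact: (@open0 T)].
move=> G oG [y Gy].
have [e [e0 eG]] := proj1 (d_compat G) oG y Gy.
have e20 : 0 < e / 2 by rewrite divr_gt0.
have [x [[Bx Dx]]] : (([set z | d y z < e / 2]) `&` D) !=set0.
  apply: hdD; last exact: ball_open.
  by exists y; rewrite /= (proj2 (d_eq0 y y) erefl).
have [nn hnn] := inv_small e0.
exists (pickle (f x, nn)); rewrite /V pickleK.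
have := hpick (f x); case: (pick (f x)) => [x' [Dx' fx']|nx]; last first.
  by exfalso; apply: nx; exists x.
have -> : x' = x by apply: finj; rewrite ?inE.
split.
  by exists x; rewrite /= (proj2 (d_eq0 x x) erefl) invr_gt0 ltr0n.
move=> z /= hz; apply: eG => /=; have := d_tri y x z; move: Bx hnn hz => /= Bx hnn hz.
move=> h; apply: (le_lt_trans h); rewrite [X in _ < X]splitr; apply: ltrD => //.
exact: lt_trans hz hnn.
Qed.

End Enum.
Section Main.
Variable T : topologicalType.
Variable d : T -> T -> Rdefinitions.R.
Hypothesis hd : complete_compatible_metric d.
Variable B : set (set T).
Hypothesis hB1 : forall U, B U -> open U /\ K_elastic_on U.
Hypothesis hB2 : forall x (V : set T), open V -> V x -> exists U, [/\ B U, U x & U `<=` V].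
Variable V : nat -> set T.
Hypothesis hVo : forall k, open (V k).

Let hT := metric_hausdorff hd.

Record state := St { nr : nat; Nr : nat -> set T; Cr : nat -> set T; Ps : set T; Ws : nat -> set T }.

Definition Inv (k : nat) (s : state) : Prop :=
  [/\ (forall i, (i < nr s)%N -> [/\ open (Nr s i), K_elastic_on (Nr s i), compact (Cr s i),
                                 Cr s i `<=` Nr s i & Nr s i `&` Ps s = set0]),
      (forall i j, (i < nr s)%N -> (j < nr s)%N -> i != j -> Nr s i `&` Nr s j = set0),
      nowhere_dense (Ps s) &
      (forall j, (j < k)%N -> [/\ open (Ws s j), Ws s j `<=` V j & (V j !=set0 -> Ws s j !=set0 /\
                                 exists i, (i < nr s)%N /\ Ws s j `<=` Cr s i)])].

Lemma add_V k s : Inv k s -> exists s', [/\ Ps s' = Ps s, (forall j, (j < k)%N -> Ws s' j = Ws s j) & Inv k.+1 s'].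
Proof.
move=> [I1 I2 I3 I4].
have [[y0 Vy0]|V0] := pselect (V k !=set0); last first.
  exists (St (nr s) (Nr s) (Cr s) (Ps s) (fun j => if j == k then set0 else Ws s j)); split => //=.
    by move=> j jk; rewrite /= (ltn_eqF jk).
  split => // j; rewrite ltnS leq_eqVlt => /orP [/eqP ->|jk]; rewrite /= ?eqxx.
    by split => //; exact: (@open0 T).
  rewrite /= (ltn_eqF jk); exact: I4.
have [[i [ir [y [Vy Ny]]]]|nA] := pselect (exists i, (i < nr s)%N /\ (V k `&` Nr s i) !=set0).
  have [oNi kNi cCi CNi NPi] := I1 i ir.
  have [M [BM My cM MG]] := small_open_B hd hB1 hB2 (openI (hVo k) oNi) (conj Vy Ny).
  have [oM _] := hB1 BM.
  exists (St (nr s) (Nr s) (fun j => if j == i then Cr s i `|` closure M else Cr s j) (Ps s)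
             (fun j => if j == k then M else Ws s j)); split => //=.
    by move=> j jk; rewrite /= (ltn_eqF jk).
  split => //=.
  - move=> j jr; have [oNj kNj cCj CNj NPj] := I1 j jr; split => //.
      by case: ifP => // /eqP jei; subst j; apply: compactU.
    case: ifP => // /eqP jei; subst j; by move=> z [/CNj|/MG []].
  - move=> j; rewrite ltnS leq_eqVlt => /orP [/eqP ->|jk]; rewrite /= ?eqxx.
      split => //.
      - by move=> z /(@subset_closure _ M) /MG [].
      - move=> _; split; first by exists y.
        exists i; split => // z Mz; rewrite eqxx; right; exact: subset_closure.
    rewrite /= (ltn_eqF jk); have [? ? hW] := I4 j jk; split => // /hW [? [i' [i'r Wi']]].
    split => //; exists i'; split => //; case: ifP => // /eqP jei; subst i'; by move=> z /Wi' ?; left.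
have nAi : forall i, (i < nr s)%N -> V k `&` Nr s i = set0.
  move=> i ir; apply/seteqP; split => // z hz; apply: nA; exists i; split => //; by exists z.
have oG : open (V k `&` ~` closure (Ps s)).
  by apply: openI => //; rewrite -closedC setCK; exact: closed_closure.
have [y [Vy nPy]] := nd_open_diff I3 (hVo k) (ex_intro _ y0 Vy0).
have [E [BE Ey EG]] := hB2 oG (conj Vy nPy).
have [oE kE] := hB1 BE.
have [M [BM My cM ME]] := small_open_B hd hB1 hB2 oE Ey.
have [oM _] := hB1 BM.
have EP : E `&` Ps s = set0.
  apply/seteqP; split => // z [/EG [_ nz] Pz]; apply: nz; exact: subset_closure.
exists (St (nr s).+1 (fun j => if j == nr s then E else Nr s j)
           (fun j => if j == nr s then closure M else Cr s j) (Ps s)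
           (fun j => if j == k then M else Ws s j)); split => //=.
  by move=> j jk; rewrite /= (ltn_eqF jk).
rewrite /Inv /=; split.
- move=> j; rewrite ltnS leq_eqVlt => /orP [/eqP ->|jr]; rewrite /= ?eqxx.
    by split.
  by rewrite /= (ltn_eqF jr); apply: I1.
- move=> i j ir jr nij.
  have EN : forall j, (j < nr s)%N -> E `&` Nr s j = set0.
    move=> j' j'r; apply/seteqP; split => // z [/EG [Vz _] Nz].
    by have : (V k `&` Nr s j') z by []; rewrite nAi.
  have [ie|ine] := eqVneq i (nr s); have [je|jne] := eqVneq j (nr s).
  + by move: nij; rewrite ie je eqxx.
  + have jr' : (j < nr s)%N by rewrite ltn_neqAle jne -ltnS.
    by apply: EN.
  + have ir' : (i < nr s)%N by rewrite ltn_neqAle ine -ltnS.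
    by rewrite setIC; apply: EN.
  + have jr' : (j < nr s)%N by rewrite ltn_neqAle jne -ltnS.
    have ir' : (i < nr s)%N by rewrite ltn_neqAle ine -ltnS.
    by apply: I2.
- exact: I3.
- move=> j; rewrite ltnS leq_eqVlt => /orP [/eqP ->|jk]; rewrite /= ?eqxx.
    split => //.
    - by move=> z /(@subset_closure _ M) /ME /EG [].
    - move=> _; split; first by exists y.
      exists (nr s); split => //; rewrite eqxx; exact: subset_closure.
  rewrite /= (ltn_eqF jk); have [? ? hW] := I4 j jk; split => // /hW [? [i' [i'r Wi']]].
  split => //; exists i'; split; first exact: ltnW.
  by rewrite /= (ltn_eqF i'r).
Qed.
Fixpoint compn (f : nat -> T -> T) n : T -> T := if n is n'.+1 then f n' \o compn f n' else id.

Lemma shrink_all k s a : Inv k s -> nowhere_dense a ->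
  exists gm s1, [/\ Gamma gm, (forall y, Ps s y -> gm y = y), ((nr s = 0)%N -> gm = id),
    Ps s1 = Ps s `|` gm @` a & (forall j, Ws s1 j = Ws s j) /\ Inv k s1].
Proof.
move=> [I1 I2 I3 I4] na.
pose Spec i (p : (T -> T) * set T) :=
  [/\ Gamma p.1, (forall x, ~ Nr s i x -> p.1 x = x), (forall x, Nr s i x -> Nr s i (p.1 x)),
      [/\ p.2 `<=` Nr s i, open p.2, K_elastic_on p.2 & Cr s i `<=` p.2] &
      (forall x, a x -> Nr s i x -> ~ p.2 (p.1 x))].
have : forall i, exists p, (i < nr s)%N -> Spec i p.
  move=> i; have [ir|nir] := boolP (i < nr s)%N; last by exists (id, set0).
  have [oN kN cC CN _] := I1 i ir.
  have [gm [N' [G1 G2 G3 G4 G5]]] := shrink_region hd hB1 hB2 oN kN cC CN na.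
  by exists (gm, N').
move=> /choice [F hF].
pose f i := (F i).1.
have ind : forall n, (n <= nr s)%N -> [/\ Gamma (compn f n),
    (forall x, (forall j, (j < n)%N -> ~ Nr s j x) -> compn f n x = x) &
    (forall j x, (j < n)%N -> Nr s j x -> compn f n x = f j x)].
  elim => [_|n IH nr']; first by split => //; exact: Gamma_id.
  have [G1 G2 G3] := IH (ltnW nr').
  have [S1 S2 S3 S4 S5] := hF n nr'.
  split.
  - exact: Gamma_comp.
  - move=> x hx /=; rewrite G2; first by apply: S2; apply: hx.
    by move=> j jn; apply: hx; apply: ltnW.
  - move=> j x; rewrite ltnS leq_eqVlt => /orP [/eqP ->|jn] Nx /=.
      rewrite G2 //.
      move=> j' j'n Nj'; have : (Nr s j' `&` Nr s n) x by [].
      by rewrite I2 // ?(ltn_trans j'n) // ltn_eqF.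
    rewrite (G3 j x jn Nx); apply: S2 => Nn.
    have [T1 T2 T3 T4 T5] := hF j (ltn_trans jn nr').
    have : (Nr s j `&` Nr s n) (f j x) by split => //; apply: T3.
    by rewrite I2 // ?(ltn_trans jn) // ltn_eqF.
have [Gg Gfix Gin] := ind (nr s) (leqnn _).
have [g [gf fg cf cg]] := homeo_setT Gg.1.
exists (compn f (nr s)), (St (nr s) (fun i => (F i).2) (Cr s) (Ps s `|` compn f (nr s) @` a) (Ws s)).
split => //.
- move=> y Py; apply: Gfix => j jr Ny; have [_ _ _ _ NP] := I1 j jr.
  by have : (Nr s j `&` Ps s) y by []; rewrite NP.
- by move=> ->.
split => //; rewrite /Inv /=; split.
- move=> i ir; have [oN kN cC CN NP] := I1 i ir; have [S1 S2 S3 [S4 S5 S6 S7] S8] := hF i ir.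
  split => //; apply/seteqP; split => // z [N'z [Pz|[x ax e]]].
    have : (Nr s i `&` Ps s) z by split => //; apply: S4.
    by rewrite NP.
  have [[j [jr Nj]]|nx] := pselect (exists j, (j < nr s)%N /\ Nr s j x).
    rewrite (Gin j x jr Nj) in e.
    have [T1 T2 T3 T4 T5] := hF j jr.
    have [ij|nij] := eqVneq i j.
      by subst j; apply: (S8 x ax Nj); rewrite /f in e; rewrite e.
    have : (Nr s i `&` Nr s j) z by split; [apply: S4 | rewrite -e; apply: T3].
    by rewrite I2.
  rewrite Gfix in e; last by move=> j jr Nj; apply: nx; exists j.
  by exfalso; apply: nx; exists i; split => //; rewrite e; apply: S4.
- move=> i j ir jr nij; have [_ _ _ [S4 _ _ _] _] := hF i ir; have [_ _ _ [T4 _ _ _] _] := hF j jr.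
  apply/seteqP; split => // z [/S4 Nz /T4 Nz']; have : (Nr s i `&` Nr s j) z by [].
  by rewrite I2.
- apply: nd_union => //; exact: (nd_image gf fg cf cg).
- exact: I4.
Qed.
Definition step_spec (k : nat) (s : state) (a : set T) (r : (T -> T) * state) : Prop :=
  Inv k s -> nowhere_dense a ->
  [/\ Gamma r.1, (forall y, Ps s y -> r.1 y = y), ((nr s = 0)%N -> r.1 = id),
      Ps r.2 = Ps s `|` r.1 @` a &
      (forall j, (j < k)%N -> Ws r.2 j = Ws s j) /\ Inv k.+1 r.2].

Lemma step_ex k s a : exists r, step_spec k s a r.
Proof.
have [[hI hn]|h] := pselect (Inv k s /\ nowhere_dense a); last first.
  by exists (id, s) => hI hn; exfalso; apply: h.
have [gm [s1 [G1 G2 G3 G4 [G5 G6]]]] := shrink_all hI hn.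
have [s' [A1 A2 A3]] := add_V G6.
exists (gm, s') => _ _ /=; split => //; first by rewrite A1.
by split => // j jk; rewrite A2 // G5.
Qed.

Definition init : state := St 0 (fun _ => set0) (fun _ => set0) set0 (fun _ => set0).

Lemma Inv_init : Inv 0 init.
Proof. by split => //; rewrite /nowhere_dense /= closure0 interior0. Qed.

Hypothesis hVcov : forall G : set T, open G -> G !=set0 -> exists k, V k !=set0 /\ V k `<=` G.

Fixpoint stf (step : nat * state * set T -> (T -> T) * state) (a : nat -> set T) n : state :=
  if n is n'.+1 then (step (n', stf step a n', a n')).2 else init.

Lemma stf_ext step a b n : (forall i, (i < n)%N -> a i = b i) -> stf step a n = stf step b n.
Proof.
elim: n => // n IH h /=; rewrite IH ?h //.
by move=> i lt; apply: h; apply: ltnW.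
Qed.

Lemma strategy_exists : exists sigma : II_strategy T, winning_II sigma.
Proof.
have [step hstep] := choice (fun p : nat * state * set T => step_ex p.1.1 p.1.2 p.2).
pose sigma (l : seq (set T)) := (step ((size l).-1, stf step (nth set0 l) (size l).-1, nth set0 l (size l).-1)).1.
exists sigma => a na.
have geq : forall n, sigma (history a n) = (step (n, stf step a n, a n)).1.
  move=> n; rewrite /sigma /history size_mkseq /= nth_mkseq //.
  by rewrite (@stf_ext step _ a) // => i lt; rewrite nth_mkseq // ltnW.
rewrite /=.
set gam := fun n => (step (n, stf step a n, a n)).1.
have inv : forall n, Inv n (stf step a n).
  elim => [|n IH]; first exact: Inv_init.
  by have [_ _ _ _ [_]] := hstep (n, stf step a n, a n) IH (na n).
have sp := fun n => hstep (n, stf step a n, a n) (inv n) (na n).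
have Pin : forall m n, (m < n)%N -> gam m @` a m `<=` Ps (stf step a n).
  move=> m; elim => // n IH; rewrite ltnS leq_eqVlt => /orP [/eqP ->|mn] /=.
    by have [_ _ _ -> _] := sp n; move=> z hz; right.
  by have [_ _ _ -> _] := sp n; move=> z /(IH mn) hz; left.
have Wst : forall j n, (j < n)%N -> Ws (stf step a n) j = Ws (stf step a j.+1) j.
  move=> j; elim => // n IH; rewrite ltnS leq_eqVlt => /orP [/eqP ->|jn] //.
  have [_ _ _ _ [hw _]] := sp n; rewrite /= in hw.
  by rewrite /= hw // IH.
split.
- by move=> n; rewrite geq; have [] := sp n.
- by rewrite geq; have [_ _ h0 _ _] := sp 0; apply: h0.
- move=> n m mn y; rewrite !geq => /(Pin _ _ mn) Py; have [_ hf _ _ _] := sp n; exact: hf.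
have -> : \bigcup_n [set sigma (history a n) x | x in a n] = \bigcup_n (gam n @` a n).
  by apply/seteqP; split => z [n _ hz]; exists n => //; move: hz; rewrite geq.
apply/seteqP; split => x // hx.
have oG : open (closure (\bigcup_n (gam n @` a n)))° by exact: open_interior.
have [k [[v Vv] VG]] := hVcov oG (ex_intro _ x hx).
have [_ _ _ I4] := inv k.+1.
have [oW WV /(_ (ex_intro _ v Vv)) [Wne [i [ir WC]]]] := I4 k (ltnSn k).
have WU : Ws (stf step a k.+1) k `<=` closure (\bigcup_n (gam n @` a n)).
  by move=> z /WV /VG /interior_subset.
have : Ws (stf step a k.+1) k `&` \bigcup_n (gam n @` a n) !=set0.
  apply: contrapT => hne.
  have e0 : Ws (stf step a k.+1) k `&` \bigcup_n (gam n @` a n) = set0.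
    by apply/seteqP; split => // z hz; apply: hne; exists z.
  have := open_disj_closure oW e0; case: Wne => w Ww e1.
  have : (Ws (stf step a k.+1) k `&` closure (\bigcup_n (gam n @` a n))) w.
    by split => //; apply: WU.
  by rewrite e1.
move=> [w [Ww [m _ hm]]].
pose n := (maxn k.+1 m.+1).
have kn : (k < n)%N by rewrite leq_max ltnSn.
have mn : (m < n)%N by rewrite leq_max ltnSn orbT.
have Pw := Pin m n mn w hm.
have [I1' _ _ I4'] := inv n.
have [_ _ /(_ (ex_intro _ v Vv)) [_ [i' [i'r WC']]]] := I4' k kn.
rewrite Wst // in WC'.
have [_ _ _ CN NP] := I1' i' i'r.
have : (Nr (stf step a n) i' `&` Ps (stf step a n)) w by split => //; apply: CN; apply: WC'.
by rewrite NP.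
Qed.

End Main.

Theorem mainTheorem8 (T : topologicalType) :
  polish T -> no_isolated_points T -> locally_K_elastic T ->
  exists sigma : II_strategy T, winning_II sigma.
Proof.
move=> [[D [cD dD]] [d hd]] _ [B [hB1 hB2]].
have [V [hVo hVcov]] := enum_exists hd cD dD.
exact: (strategy_exists hd hB1 hB2 hVo hVcov).
Qed.
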